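(* $F_\tau'=F_\tau''$, i.e. the commutator subgroup $[F_\tau,F_\tau]$ is equal to its own commutator subgroup.
   Context: Let $\tau=(\sqrt5-1)/2$. $F_\tau$ is the group, under composition, of orientation-preserving homeomorphisms of $[0,1]$ that are piecewise linear with finitely many breakpoints, all breakpoints in $\mathbb{Z}[\tau]=\{a+b\tau:a,b\in\mathbb{Z}\}$ and all slopes integer powers of $\tau$. $F_\tau'=[F_\tau,F_\tau]$ and $F_\tau''=[F_\tau',F_\tau']$. *)

(* Defs.v *)
From Stdlib Require Import Reals ZArith.
Open Scope R_scope.

Definition tau : R := (sqrt 5 - 1) / 2.

Definition in_Ztau (x : R) : Prop :=
  exists a b : Z, x = IZR a + IZR b * tau.

(* f : R -> R represents an element of F_tau: it is the identity outside
   [0,1], fixes 0 and 1, and there is a subdivision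
   0 = xs 0 < xs 1 < ... < xs n = 1 of [0,1] with all subdivision points in
   Z[tau] such that on each [xs i, xs (i+1)] the map f is affine with slope
   tau^(ks i), ks i an integer.  (Agreement on the shared endpoints forces
   continuity; positive slopes plus f 0 = 0, f 1 = 1 make f an
   orientation-preserving homeomorphism of [0,1].) *)
Definition in_Ftau (f : R -> R) : Prop :=
  (forall x, (x < 0 \/ 1 < x) -> f x = x) /\
  f 0 = 0 /\ f 1 = 1 /\
  exists (n : nat) (xs : nat -> R) (ks : nat -> Z),
    (1 <= n)%nat /\ xs 0%nat = 0 /\ xs n = 1 /\
    (forall i, (i <= n)%nat -> in_Ztau (xs i)) /\
    (forall i, (i < n)%nat -> xs i < xs (S i)) /\
    (forall i, (i < n)%nat -> forall x, xs i <= x <= xs (S i) ->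
        f x = f (xs i) + powerRZ tau (ks i) * (x - xs i)).

Definition is_inv (f g : R -> R) : Prop :=
  forall x, f (g x) = x /\ g (f x) = x.

(* The commutator subgroup [H,H] of a group H of maps (group law =
   composition): all finite products of commutators a^-1 b^-1 a b with
   a, b in H.  (Inverses of commutators are commutators, so this set is
   the subgroup generated by the commutators.) *)
Inductive derived (H : (R -> R) -> Prop) : (R -> R) -> Prop :=
| derived_id : derived H (fun x => x)
| derived_step : forall a ai b bi g,
    H a -> H b -> is_inv a ai -> is_inv b bi -> derived H g ->
    derived H (fun x => ai (bi (a (b (g x))))).

Definition Ftau' : (R -> R) -> Prop := derived in_Ftau.
Definition Ftau'' : (R -> R) -> Prop := derived Ftau'.

(* Main.v *)
Require Import Defs.
From Stdlib Require Import Reals Lra Lia Psatz ZArith Nsatz.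
From Stdlib Require Import IndefiniteDescription FunctionalExtensionality Classical.
Open Scope R_scope.

Ltac nsz := repeat match goal with
  | H : ?a < ?b |- _ => clear H | H : ?a <= ?b |- _ => clear H
  | H : _ /\ _ |- _ => clear H | H : forall _, _ |- _ => clear H
  | H : ?a <> ?b |- _ => clear H | H : ?a > ?b |- _ => clear H | H : ?a >= ?b |- _ => clear H
  | H : in_Ztau _ |- _ => clear H | H : exists _, _ |- _ => clear H
  end; nsatz.

Lemma tau_facts : 0 < tau /\ tau < 1 /\ tau * tau = 1 - tau.
Proof.
  unfold tau. assert (Hs := sqrt_sqrt 5 ltac:(lra)). assert (H0 := sqrt_pos 5).
  set (s := sqrt 5) in *.
  assert (1 < s) by nra. assert (s < 3) by nra.
  split; [lra|split;[lra|]].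
  replace ((s-1)/2 * ((s-1)/2)) with ((s*s - 2*s+1)/4) by field. rewrite Hs. field.
Qed.
Lemma tau_pos : 0 < tau. Proof. apply tau_facts. Qed.
Lemma tau_lt1 : tau < 1. Proof. apply tau_facts. Qed.
Lemma tau_sq : tau * tau = 1 - tau. Proof. apply tau_facts. Qed.
Lemma tau_neq0 : tau <> 0. Proof. generalize tau_pos; lra. Qed.
Lemma tau_inv : / tau = 1 + tau.
Proof. assert (H1:=tau_neq0).
  assert (E: tau*(1+tau) = 1) by (rewrite Rmult_plus_distr_l, Rmult_1_r, tau_sq; ring).
  apply (Rmult_eq_reg_l tau); [rewrite Rinv_r by exact H1; lra | exact H1]. Qed.

Notation tp := (powerRZ tau).
Lemma tp_pos k : 0 < tp k. Proof. apply powerRZ_lt, tau_pos. Qed.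
Lemma tp_add j k : tp (j + k) = tp j * tp k. Proof. apply powerRZ_add, tau_neq0. Qed.
Lemma tp_0 : tp 0 = 1. Proof. reflexivity. Qed.
Lemma tp_1 : tp 1 = tau. Proof. simpl. ring. Qed.
Lemma tp_m1 : tp (-1) = 1 + tau. Proof. simpl. rewrite Rmult_1_r. apply tau_inv. Qed.
Lemma tp_negK k : tp (- k) * tp k = 1.
Proof. rewrite <- tp_add. replace (-k+k)%Z with 0%Z by lia. reflexivity. Qed.
Lemma tp_Kneg k : tp k * tp (- k) = 1.
Proof. rewrite Rmult_comm. apply tp_negK. Qed.

Notation inZ := in_Ztau.
Lemma inZ_int z : inZ (IZR z). Proof. exists z, 0%Z. ring. Qed.
Lemma inZ_0 : inZ 0. Proof. exact (inZ_int 0). Qed.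
Lemma inZ_1 : inZ 1. Proof. exact (inZ_int 1). Qed.
Lemma inZ_tau : inZ tau. Proof. exists 0%Z, 1%Z. ring. Qed.
Lemma inZ_add x y : inZ x -> inZ y -> inZ (x + y).
Proof. intros [a [b ->]] [c [d ->]]. exists (a+c)%Z, (b+d)%Z. rewrite !plus_IZR. ring. Qed.
Lemma inZ_opp x : inZ x -> inZ (- x).
Proof. intros [a [b ->]]. exists (-a)%Z, (-b)%Z. rewrite !opp_IZR. ring. Qed.
Lemma inZ_sub x y : inZ x -> inZ y -> inZ (x - y).
Proof. intros. apply inZ_add; auto. apply inZ_opp; auto. Qed.
Lemma inZ_mul x y : inZ x -> inZ y -> inZ (x * y).
Proof.
  intros [a [b ->]] [c [d ->]]. exists (a*c + b*d)%Z, (a*d+b*c-b*d)%Z.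
  rewrite !minus_IZR, !plus_IZR, !mult_IZR. assert (H:=tau_sq). nsatz.
Qed.
Lemma inZ_pow x n : inZ x -> inZ (x ^ n).
Proof. intros H; induction n; simpl. apply inZ_1. apply inZ_mul; auto. Qed.
Lemma inZ_tp k : inZ (tp k).
Proof.
  destruct k; simpl. apply inZ_1. apply inZ_pow, inZ_tau.
  rewrite <- pow_inv, tau_inv.
  apply inZ_pow, inZ_add. apply inZ_1. apply inZ_tau.
Qed.

Definition aff (f : R -> R) u v k := forall x, u <= x <= v -> f x = f u + tp k * (x - u).
Inductive PL (f : R -> R) : R -> R -> Prop :=
| PL_one : forall u v k, u < v -> inZ u -> inZ v -> aff f u v k -> PL f u v
| PL_cat : forall u v w, PL f u v -> PL f v w -> PL f u w.

Lemma PL_lt f u v : PL f u v -> u < v.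
Proof. induction 1; lra. Qed.
Lemma PL_Zl f u v : PL f u v -> inZ u.
Proof. induction 1; auto. Qed.
Lemma PL_Zr f u v : PL f u v -> inZ v.
Proof. induction 1; auto. Qed.
Lemma PL_Zimg f u v : PL f u v -> inZ (f u) -> inZ (f v).
Proof.
  induction 1; intros Hu; auto.
  rewrite H2 by lra. apply inZ_add; auto. apply inZ_mul. apply inZ_tp. apply inZ_sub; auto.
Qed.
Lemma PL_smono f u v : PL f u v -> forall x y, u <= x -> x < y -> y <= v -> f x < f y.
Proof.
  induction 1; intros x y Hx1 Hx2 Hx3.
  - rewrite (H2 x), (H2 y) by lra.
    assert (tp k * (x - u) < tp k * (y - u)) by (apply Rmult_lt_compat_l; [apply tp_pos|lra]). lra.
  - assert (u < v) by (eapply PL_lt; eauto). assert (v < w) by (eapply PL_lt; eauto).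
    destruct (Rle_lt_dec y v). apply IHPL1; lra.
    destruct (Rle_lt_dec v x). apply IHPL2; lra.
    assert (f x < f v) by (apply IHPL1; lra). assert (f v < f y) by (apply IHPL2; lra). lra.
Qed.
Lemma PL_wmono f u v : PL f u v -> forall x y, u <= x -> x <= y -> y <= v -> f x <= f y.
Proof.
  intros H x y H1 H2 H3. destruct (Req_dec x y). subst; lra.
  left. eapply PL_smono; eauto. lra.
Qed.
Lemma PL_ends f u v u' v' : PL f u v -> u = u' -> v = v' -> PL f u' v'.
Proof. intros; subst; auto. Qed.
Lemma PL_piece f u v c k : u < v -> inZ u -> inZ v ->
  (forall x, u <= x <= v -> f x = c + tp k * (x - u)) -> PL f u v.
Proof.
  intros H1 H2 H3 H4. apply (PL_one f u v k); auto. intros x Hx.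
  rewrite (H4 x Hx), (H4 u) by lra. ring.
Qed.
Lemma PL_ext f g u v : PL f u v -> (forall x, u <= x <= v -> f x = g x) -> PL g u v.
Proof.
  induction 1; intros He.
  - apply (PL_one g u v k); auto. intros x Hx. rewrite <- !He by lra. apply H2; auto.
  - assert (u < v) by (eapply PL_lt; eauto). assert (v < w) by (eapply PL_lt; eauto).
    apply PL_cat with v; [apply IHPL1|apply IHPL2]; intros; apply He; lra.
Qed.
Lemma PL_split f u w : PL f u w -> forall m, u < m < w -> inZ m -> PL f u m /\ PL f m w.
Proof.
  induction 1; intros m Hm HZ.
  - split.
    + apply (PL_one f u m k); auto; [lra|]. intros x Hx; apply H2; lra.
    + apply (PL_one f m v k); auto; [lra|]. intros x Hx. rewrite (H2 x), (H2 m) by lra. ring.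
  - assert (u < v) by (eapply PL_lt; eauto). assert (v < w) by (eapply PL_lt; eauto).
    destruct (Rtotal_order m v) as [Hl|[He|Hg]].
    + destruct (IHPL1 m) as [A1 A2]; auto; [lra|]. split; auto. apply PL_cat with v; auto.
    + subst. auto.
    + destruct (IHPL2 m) as [A1 A2]; auto; [lra|]. split; auto. apply PL_cat with v; auto.
Qed.

Lemma PL_comp_aff g u v k : u < v -> inZ u -> aff g u v k -> inZ (g u) ->
  forall f s t, PL f s t -> g u <= s -> t <= g v ->
  PL (fun x => f (g x)) (u + tp (-k) * (s - g u)) (u + tp (-k) * (t - g u)).
Proof.
  intros Huv HZu Hg HZg f s t H. induction H as [s t j Hst HZs HZt Hf| s m t H1 IH1 H2 IH2];
    intros Hs Ht.
  - set (K := tp k) in *. set (Ki := tp (-k)).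
    assert (KK : K * Ki = 1) by apply tp_Kneg.
    assert (Kp : 0 < K) by apply tp_pos. assert (Kip : 0 < Ki) by apply tp_pos.
    assert (Hg' : forall x, u <= x <= v -> g x = g u + K * (x - u)) by exact Hg.
    assert (EK : K = tp k) by reflexivity. assert (EKi : Ki = tp (-k)) by reflexivity.
    clearbody K Ki. clear Hg. rename Hg' into Hg.
    set (s' := u + Ki * (s - g u)). set (t' := u + Ki * (t - g u)).
    assert (E1 : K * (s' - u) = s - g u) by (unfold s'; nsz).
    assert (E2 : K * (t' - u) = t - g u) by (unfold t'; nsz).
    assert (Egv : g v = g u + K * (v - u)) by (apply Hg; lra).
    assert (Hu1 : u <= s') by (unfold s'; assert (0 <= Ki * (s - g u)) by (apply Rmult_le_pos; lra); lra).
    assert (Hst' : s' < t').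
    { apply (Rmult_lt_reg_l K); auto. lra. }
    assert (Hv1 : t' <= v).
    { apply (Rmult_le_reg_l K); auto. lra. }
    apply (PL_one _ s' t' (j + k)); auto.
    + unfold s'. rewrite EKi. repeat (apply inZ_add || apply inZ_mul || apply inZ_sub || apply inZ_opp); auto using inZ_tp.
    + unfold t'. rewrite EKi. repeat (apply inZ_add || apply inZ_mul || apply inZ_sub || apply inZ_opp); auto using inZ_tp.
    + intros x Hx.
      assert (Egx : g x = g u + K * (x - u)) by (apply Hg; lra).
      assert (Egs : g s' = s) by (rewrite (Hg s') by lra; lra).
      assert (K * (s' - u) <= K * (x - u)) by (apply Rmult_le_compat_l; lra).
      assert (K * (x - u) <= K * (t' - u)) by (apply Rmult_le_compat_l; lra).
      rewrite Egs, (Hf (g x)) by lra. rewrite tp_add, Egx, <- EK.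
      unfold s'. nsz.
  - assert (s < m) by (eapply PL_lt; eauto). assert (m < t) by (eapply PL_lt; eauto).
    apply PL_cat with (u + tp (- k) * (m - g u)); [apply IH1|apply IH2]; lra.
Qed.

Lemma PL_comp g u v : PL g u v -> inZ (g u) -> forall f, PL f (g u) (g v) ->
  PL (fun x => f (g x)) u v.
Proof.
  induction 1 as [u v k Huv HZu HZv Hg| u m w H1 IH1 H2 IH2]; intros HZg f Hf.
  - eapply PL_ends. apply (PL_comp_aff g u v k); eauto; lra.
    ring. rewrite (Hg v) by lra. assert (H := tp_negK k). nsz.
  - assert (u < m) by (eapply PL_lt; eauto). assert (m < w) by (eapply PL_lt; eauto).
    assert (g u < g m) by (apply (PL_smono g u w (PL_cat g u m w H1 H2)); lra).
    assert (g m < g w) by (apply (PL_smono g u w (PL_cat g u m w H1 H2)); lra).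
    assert (HZm : inZ (g m)) by (eapply PL_Zimg; eauto).
    destruct (PL_split f _ _ Hf (g m)) as [F1 F2]; auto.
    apply PL_cat with m; auto.
Qed.

Lemma PL_inv f u v fi : PL f u v -> inZ (f u) -> (forall y, fi (f y) = y) ->
  PL fi (f u) (f v).
Proof.
  intros H HZ Hi. induction H as [u v k Huv HZu HZv Hf| u m w H1 IH1 H2 IH2].
  - assert (Hfv : f v = f u + tp k * (v - u)) by (apply Hf; lra).
    assert (Kp := tp_pos k). assert (KK := tp_Kneg k).
    assert (f u < f v) by (rewrite Hfv; assert (0 < tp k * (v - u)) by (apply Rmult_lt_0_compat; lra); lra).
    apply (PL_one fi (f u) (f v) (-k)); auto.
    + eapply PL_Zimg; eauto. apply PL_one with k; auto.
    + intros y Hy. set (x := u + tp (-k) * (y - f u)).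
      assert (Ex : tp k * (x - u) = y - f u) by (unfold x; nsz).
      assert (Hxr : u <= x <= v).
      { split; apply (Rmult_le_reg_l (tp k)); auto; lra. }
      assert (Hfx : f x = y) by (rewrite Hf by auto; lra).
      transitivity x. rewrite <- Hfx; apply Hi. rewrite Hi. unfold x; ring.
  - assert (HZm : inZ (f m)) by (eapply PL_Zimg; eauto).
    apply PL_cat with (f m); auto.
Qed.

Lemma PL_surj f u v : PL f u v -> forall y, f u <= y <= f v -> exists x, u <= x <= v /\ f x = y.
Proof.
  induction 1 as [u v k Huv HZu HZv Hf| u m w H1 IH1 H2 IH2]; intros y Hy.
  - assert (Hfv : f v = f u + tp k * (v - u)) by (apply Hf; lra).
    assert (Kp := tp_pos k). assert (KK := tp_Kneg k).
    set (x := u + tp (-k) * (y - f u)).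
    assert (Ex : tp k * (x - u) = y - f u) by (unfold x; nsz).
    assert (u <= x <= v).
    { split; apply (Rmult_le_reg_l (tp k)); auto; lra. }
    exists x. split; auto. rewrite Hf by auto; lra.
  - assert (u < m) by (eapply PL_lt; eauto). assert (m < w) by (eapply PL_lt; eauto).
    destruct (Rle_lt_dec y (f m)).
    + destruct (IH1 y) as [x [Hx Hfx]]; [lra|]. exists x; split; auto; lra.
    + destruct (IH2 y) as [x [Hx Hfx]]; [lra|]. exists x; split; auto; lra.
Qed.

Lemma PL_refl f u v : PL f u v -> PL (fun x => 1 - f (1 - x)) (1 - v) (1 - u).
Proof.
  induction 1 as [u v k Huv HZu HZv Hf| u m w H1 IH1 H2 IH2].
  - apply (PL_one _ (1 - v) (1 - u) k); try lra; try (apply inZ_sub; auto using inZ_1).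
    intros x Hx. replace (1 - (1 - v)) with v by ring.
    rewrite (Hf v), (Hf (1 - x)) by lra. ring.
  - apply PL_cat with (1 - m); auto.
Qed.

Lemma PL_germL f u v : PL f u v -> exists k d, 0 < d /\ forall x, u <= x <= u + d -> f x = f u + tp k * (x - u).
Proof.
  induction 1 as [u v k Huv HZu HZv Hf| u m w H1 IH1 H2 IH2].
  - exists k, (v - u). split. lra. intros x Hx; apply Hf; lra.
  - auto.
Qed.
Lemma PL_germR f u v : PL f u v -> exists k d, 0 < d /\ forall x, v - d <= x <= v -> f x = f v + tp k * (x - v).
Proof.
  induction 1 as [u v k Huv HZu HZv Hf| u m w H1 IH1 H2 IH2].
  - exists k, (v - u). split. lra. intros x Hx. rewrite (Hf x), (Hf v) by lra. ring.
  - auto.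
Qed.

Lemma Ftau_PL f : in_Ftau f -> PL f 0 1.
Proof.
  intros [Hout [H0 [H1 [n [xs [ks [Hn [Hx0 [Hxn [HZ [Hlt Haff]]]]]]]]]]].
  assert (C : forall i, (1 <= i <= n)%nat -> PL f (xs 0%nat) (xs i)).
  { induction i; intros Hi. lia.
    destruct (Nat.eq_dec i 0).
    - subst. apply (PL_one f _ _ (ks 0%nat)); [apply Hlt; lia | apply HZ; lia | apply HZ; lia |].
      intros x Hx. apply Haff; auto; lia.
    - apply PL_cat with (xs i). apply IHi; lia.
      apply (PL_one f _ _ (ks i)); [apply Hlt; lia | apply HZ; lia | apply HZ; lia |].
      intros x Hx. apply Haff; auto; lia. }
  rewrite <- Hx0, <- Hxn. apply C; lia.
Qed.

Lemma PL_seq f u v : PL f u v -> exists (n : nat) (xs : nat -> R) (ks : nat -> Z),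
    (1 <= n)%nat /\ xs 0%nat = u /\ xs n = v /\
    (forall i, (i <= n)%nat -> in_Ztau (xs i)) /\
    (forall i, (i < n)%nat -> xs i < xs (S i)) /\
    (forall i, (i < n)%nat -> forall x, xs i <= x <= xs (S i) ->
        f x = f (xs i) + powerRZ tau (ks i) * (x - xs i)).
Proof.
  induction 1 as [u v k Huv HZu HZv Hf| u m w H1 IH1 H2 IH2].
  - exists 1%nat, (fun i => match i with O => u | _ => v end), (fun _ => k).
    repeat split; auto.
    + intros i Hi. destruct i; auto.
    + intros i Hi. destruct i; [auto|lia].
    + intros i Hi. destruct i; [|lia]. apply Hf.
  - destruct IH1 as [n1 [xs1 [ks1 [A1 [B1 [C1 [D1 [E1 F1]]]]]]]].
    destruct IH2 as [n2 [xs2 [ks2 [A2 [B2 [C2 [D2 [E2 F2]]]]]]]].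
    exists (n1 + n2)%nat, (fun i => if le_lt_dec i n1 then xs1 i else xs2 (i - n1)%nat),
      (fun i => if le_lt_dec n1 i then ks2 (i - n1)%nat else ks1 i).
    repeat split.
    + lia.
    + destruct (le_lt_dec 0 n1); auto. lia.
    + destruct (le_lt_dec (n1 + n2) n1). lia. replace (n1 + n2 - n1)%nat with n2 by lia. auto.
    + intros i Hi. destruct (le_lt_dec i n1). apply D1; auto. apply D2; lia.
    + intros i Hi. destruct (le_lt_dec i n1); destruct (le_lt_dec (S i) n1).
      * apply E1; lia.
      * assert (i = n1) by lia. subst i. rewrite C1, <- B2. replace (S n1 - n1)%nat with 1%nat by lia.
        apply E2; lia.
      * lia.
      * replace (S i - n1)%nat with (S (i - n1)) by lia. apply E2; lia.
    + intros i Hi x Hx. destruct (le_lt_dec i n1); destruct (le_lt_dec (S i) n1);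
        destruct (le_lt_dec n1 i).
      * lia.
      * apply F1; auto; lia.
      * assert (i = n1) by lia. subst i. rewrite C1, <- B2 in *.
        replace (S n1 - n1)%nat with 1%nat in * by lia. replace (n1 - n1)%nat with 0%nat by lia.
        apply F2; auto; lia.
      * lia.
      * lia. * lia.
      * replace (S i - n1)%nat with (S (i - n1)) in * by lia. apply F2; auto; lia.
      * lia.
Qed.

Lemma PL_Ftau f : (forall x, x < 0 \/ 1 < x -> f x = x) -> f 0 = 0 -> f 1 = 1 -> PL f 0 1 -> in_Ftau f.
Proof.
  intros Ho H0 H1 HP. split; auto. split; auto. split; auto. apply PL_seq; auto.
Qed.

Notation G := in_Ftau.

Lemma G_out f : G f -> forall x, x < 0 \/ 1 < x -> f x = x.
Proof. intros H; apply H. Qed.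
Lemma G_0 f : G f -> f 0 = 0. Proof. intros H; apply H. Qed.
Lemma G_1 f : G f -> f 1 = 1. Proof. intros H; apply H. Qed.

Lemma G_id : G (fun x => x).
Proof.
  apply PL_Ftau; auto. apply (PL_piece _ 0 1 0 0). lra. apply inZ_0. apply inZ_1.
  intros; rewrite tp_0; ring.
Qed.

Lemma G_comp f g : G f -> G g -> G (fun x => f (g x)).
Proof.
  intros Hf Hg. apply PL_Ftau.
  - intros x Hx. rewrite (G_out g Hg x Hx). apply G_out; auto.
  - rewrite (G_0 g Hg). apply G_0; auto.
  - rewrite (G_1 g Hg). apply G_1; auto.
  - apply PL_comp. apply Ftau_PL; auto. rewrite (G_0 g Hg). apply inZ_0.
    rewrite (G_0 g Hg), (G_1 g Hg). apply Ftau_PL; auto.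
Qed.

Lemma G_inv f fi : G f -> is_inv f fi -> G fi.
Proof.
  intros Hf Hi. apply PL_Ftau.
  - intros x Hx. rewrite <- (G_out f Hf x Hx) at 1. apply Hi.
  - rewrite <- (G_0 f Hf) at 1. apply Hi.
  - rewrite <- (G_1 f Hf) at 1. apply Hi.
  - apply (PL_ends fi (f 0) (f 1)). apply PL_inv. apply Ftau_PL; auto.
    rewrite (G_0 f Hf). apply inZ_0. intros; apply Hi. apply G_0; auto. apply G_1; auto.
Qed.

Lemma G_smono f : G f -> forall x y, x < y -> f x < f y.
Proof.
  intros Hf x y Hxy. assert (P := Ftau_PL f Hf).
  assert (H0 := G_0 f Hf). assert (H1 := G_1 f Hf). assert (Ho := G_out f Hf).
  assert (W : forall a b, 0 <= a -> a <= b -> b <= 1 -> f a <= f b) by (intros; eapply PL_wmono; eauto).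
  destruct (Rlt_le_dec x 0).
  - rewrite (Ho x) by auto. destruct (Rlt_le_dec y 0). rewrite Ho; auto.
    destruct (Rle_lt_dec y 1). assert (f 0 <= f y) by (apply W; lra). lra. rewrite (Ho y); auto.
  - destruct (Rle_lt_dec x 1).
    + destruct (Rle_lt_dec y 1). eapply PL_smono; eauto.
      assert (f x <= f 1) by (apply W; lra). rewrite (Ho y); auto. lra.
    + rewrite !Ho; auto; lra.
Qed.
Lemma G_mono f : G f -> forall x y, x <= y -> f x <= f y.
Proof.
  intros Hf x y H. destruct (Req_dec x y). subst; lra. left; apply G_smono; auto; lra.
Qed.
Lemma G_inj f : G f -> forall x y, f x = f y -> x = y.
Proof.
  intros Hf x y H. destruct (Rtotal_order x y) as [h|[h|h]]; auto.
  apply (G_smono f Hf) in h; lra. apply (G_smono f Hf) in h; lra.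
Qed.

Lemma G_inv_ex f : G f -> exists fi, is_inv f fi.
Proof.
  intros Hf.
  assert (S : forall y, exists x, f x = y).
  { intros y. destruct (Rlt_le_dec y 0). exists y; apply G_out; auto.
    destruct (Rle_lt_dec y 1).
    - destruct (PL_surj f 0 1 (Ftau_PL f Hf) y) as [x [_ Hx]].
      rewrite (G_0 f Hf), (G_1 f Hf); lra. exists x; auto.
    - exists y; apply G_out; auto. }
  exists (fun y => proj1_sig (constructive_indefinite_description _ (S y))).
  intros x. split.
  - destruct (constructive_indefinite_description _ (S x)); simpl; auto.
  - destruct (constructive_indefinite_description _ (S (f x))); simpl. eapply G_inj; eauto.
Qed.

Lemma is_inv_sym f g : is_inv f g -> is_inv g f.
Proof. intros H x; split; apply H. Qed.
Lemma inv_unique f g1 g2 : is_inv f g1 -> is_inv f g2 -> forall x, g1 x = g2 x.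
Proof. intros H1 H2 x. rewrite <- (proj2 (H2 (g1 x))). rewrite (proj1 (H1 x)). auto. Qed.

Lemma G_inv_ex' f : G f -> exists fi, is_inv f fi /\ G fi.
Proof. intros Hf. destruct (G_inv_ex f Hf) as [fi Hi]. exists fi; split; auto. eapply G_inv; eauto. Qed.

Definition sig_ (f : R -> R) := fun x => 1 - f (1 - x).
Lemma G_refl f : G f -> G (sig_ f).
Proof.
  intros Hf. unfold sig_. apply PL_Ftau.
  - intros x Hx. rewrite (G_out f Hf (1 - x)). ring. destruct Hx; [right|left]; lra.
  - replace (1 - 0) with 1 by ring. rewrite G_1; auto. ring.
  - replace (1 - 1) with 0 by ring. rewrite G_0; auto. ring.
  - eapply PL_ends. apply PL_refl. apply Ftau_PL; eauto. ring. ring.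
Qed.

Ltac sinv := repeat match goal with
 | H : is_inv ?f ?g |- context [?f (?g ?x)] => rewrite (proj1 (H x))
 | H : is_inv ?f ?g |- context [?g (?f ?x)] => rewrite (proj2 (H x)) end.

Definition cm (a ai b bi : R -> R) := fun x => ai (bi (a (b x))).

Lemma fext (f g : R -> R) : (forall x, f x = g x) -> f = g.
Proof. apply functional_extensionality. Qed.

Section Der.
Variable H : (R -> R) -> Prop.

Lemma derived_ext f g : derived H f -> (forall x, f x = g x) -> derived H g.
Proof. intros D E. rewrite <- (fext f g E). auto. Qed.

Lemma derived_comp f g : derived H f -> derived H g -> derived H (fun x => f (g x)).
Proof.
  induction 1 as [|a ai b bi f0 Ha Hb Hia Hib D IH]; intros Dg.
  - exact Dg.
  - apply (derived_step H a ai b bi (fun x => f0 (g x))); auto.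
Qed.

Lemma derived_cm a ai b bi : H a -> H b -> is_inv a ai -> is_inv b bi -> derived H (cm a ai b bi).
Proof. intros. apply (derived_step H a ai b bi (fun x => x)); auto. apply derived_id. Qed.

Lemma derived_inv_ex f : derived H f -> exists fi, derived H fi /\ is_inv f fi.
Proof.
  induction 1 as [|a ai b bi f0 Ha Hb Hia Hib D IH].
  - exists (fun x => x). split. apply derived_id. intros x; auto.
  - destruct IH as [f0i [Df0i Hf0i]].
    exists (fun x => f0i (cm b bi a ai x)). split.
    + apply derived_comp; auto. apply derived_cm; auto.
    + unfold is_inv, cm. intros x.
      destruct (Hf0i (bi (ai (b (a x))))) as [E1 _]. destruct (Hf0i x) as [_ E2].
      split.
      * rewrite E1.
        pose proof (fun y => proj1 (Hia y)) as A1. pose proof (fun y => proj2 (Hia y)) as A2.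
        pose proof (fun y => proj1 (Hib y)) as B1. pose proof (fun y => proj2 (Hib y)) as B2.
        rewrite B1, A1, B2, A2. auto.
      * pose proof (fun y => proj1 (Hia y)) as A1. pose proof (fun y => proj2 (Hia y)) as A2.
        pose proof (fun y => proj1 (Hib y)) as B1. pose proof (fun y => proj2 (Hib y)) as B2.
        rewrite A1, B1, A2, B2. auto.
Qed.

Lemma derived_inv f g : derived H f -> is_inv f g -> derived H g.
Proof.
  intros D Hi. destruct (derived_inv_ex f D) as [fi [Dfi Hfi]].
  apply derived_ext with fi; auto. intros x. eapply inv_unique; eauto.
Qed.

Lemma derived_conj c ci : is_inv c ci -> (forall a, H a -> H (fun x => c (a (ci x)))) ->
  forall f, derived H f -> derived H (fun x => c (f (ci x))).
Proof.
  intros Hc HH f. induction 1 as [|a ai b bi f0 Ha Hb Hia Hib D IH].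
  - apply derived_ext with (fun x => x). apply derived_id. intros x; symmetry; apply Hc.
  - apply derived_ext with (fun x => (fun y => c (ai (ci y))) ((fun y => c (bi (ci y)))
       ((fun y => c (a (ci y))) ((fun y => c (b (ci y))) ((fun y => c (f0 (ci y))) x))))).
    + apply (derived_step H (fun y => c (a (ci y))) (fun y => c (ai (ci y)))
        (fun y => c (b (ci y))) (fun y => c (bi (ci y))) (fun y => c (f0 (ci y)))); auto.
      * intros y; split; rewrite (proj2 (Hc _)); [rewrite (proj1 (Hia _)) | rewrite (proj2 (Hia _))]; apply Hc.
      * intros y; split; rewrite (proj2 (Hc _)); [rewrite (proj1 (Hib _)) | rewrite (proj2 (Hib _))]; apply Hc.
    + intros x. simpl. rewrite !(proj2 (Hc _)). auto.
Qed.
End Der.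

Arguments derived_ext {H}. Arguments derived_comp {H}. Arguments derived_cm {H}.
Arguments derived_inv {H}. Arguments derived_inv_ex {H}. Arguments derived_conj {H}.

Notation D1 := Ftau'.
Notation D2 := Ftau''.

Lemma dir1 f : D2 f -> D1 f.
Proof.
  induction 1 as [|a ai b bi f0 Ha Hb Hia Hib D IH].
  - apply derived_id.
  - assert (D1 ai) by (apply (derived_inv a ai); auto).
    assert (D1 bi) by (apply (derived_inv b bi); auto).
    unfold Ftau' in *. repeat (apply derived_comp; auto).
Qed.

Notation N := Ftau''.

Lemma N_ext f g : N f -> (forall x, f x = g x) -> N g.
Proof. apply derived_ext. Qed.
Lemma N_comp f g : N f -> N g -> N (fun x => f (g x)).
Proof. apply derived_comp. Qed.
Lemma N_inv f g : N f -> is_inv f g -> N g.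
Proof. apply derived_inv. Qed.
Lemma D1_comp f g : D1 f -> D1 g -> D1 (fun x => f (g x)).
Proof. apply derived_comp. Qed.
Lemma D1_inv f g : D1 f -> is_inv f g -> D1 g.
Proof. apply derived_inv. Qed.

Lemma D1_conj c ci : G c -> is_inv c ci -> forall f, D1 f -> D1 (fun x => c (f (ci x))).
Proof.
  intros Gc Hc. apply derived_conj; auto. intros a Ga.
  apply G_comp; auto. apply G_comp; auto. apply (G_inv c ci); auto.
Qed.
Lemma N_conj c ci : G c -> is_inv c ci -> forall f, N f -> N (fun x => c (f (ci x))).
Proof.
  intros Gc Hc. apply derived_conj; auto. intros a Da. apply D1_conj; auto.
Qed.

Definition sg (x : R) := 1 - x.
Lemma sg_inv : is_inv sg sg. Proof. intros x; unfold sg; split; ring. Qed.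
Lemma G_sig f : G f -> G (fun x => sg (f (sg x))).
Proof. apply G_refl. Qed.
Lemma D1_sig f : D1 f -> D1 (fun x => sg (f (sg x))).
Proof. apply derived_conj. apply sg_inv. apply G_sig. Qed.
Lemma N_sig f : N f -> N (fun x => sg (f (sg x))).
Proof. apply derived_conj. apply sg_inv. apply D1_sig. Qed.

Definition fixes (f : R -> R) (P : R -> Prop) := forall x, ~ P x -> f x = x.

Lemma fix_inv f fi P : is_inv f fi -> fixes f P -> fixes fi P.
Proof.
  intros Hi Hf x Hx. rewrite <- (Hf x Hx) at 1. apply Hi.
Qed.
Lemma fix_in f fi P : is_inv f fi -> fixes f P -> forall x, P x -> P (f x).
Proof.
  intros Hi Hf x Hx. destruct (classic (P (f x))) as [h|h]; auto.
  assert (E := Hf _ h). assert (f x = x).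
  { rewrite <- (proj2 (Hi (f x))), E. apply Hi. }
  rewrite H; auto.
Qed.

Lemma commute f fi g gi P Q : is_inv f fi -> is_inv g gi -> fixes f P -> fixes g Q ->
  (forall x, P x -> ~ Q x) -> forall x, f (g x) = g (f x).
Proof.
  intros Hf Hg Ff Fg D x. destruct (classic (P x)) as [h|h].
  - assert (P (f x)) by (eapply fix_in; eauto).
    rewrite (Fg (f x)) by auto. rewrite (Fg x) by auto. auto.
  - rewrite (Ff x h). destruct (classic (Q x)) as [q|q].
    + assert (Q (g x)) by (eapply fix_in; eauto).
      apply Ff. intros p. apply (D _ p). auto.
    + rewrite (Fg x q). auto.
Qed.

Lemma disp f fi g gi h hi P : is_inv f fi -> is_inv g gi -> is_inv h hi ->
  fixes f P -> fixes g P -> (forall x, P x -> ~ P (h x)) ->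
  forall z, fi (gi (f (g z))) = fi (hi (g (h (gi (f (g (hi (gi (h z))))))))).
Proof.
  intros Hf Hg Hh Ff Fg D z.
  assert (Fgi : fixes gi P) by (eapply fix_inv; eauto).
  assert (Ffi : fixes fi P) by (eapply fix_inv; eauto).
  assert (Ig : forall x, P x -> P (g x)) by (eapply fix_in; eauto).
  assert (If : forall x, P x -> P (f x)) by (eapply fix_in; eauto).
  assert (Igi : forall x, P x -> P (gi x)) by (eapply fix_in; eauto using is_inv_sym).
  destruct (classic (P (h z))) as [q|q].
  - set (w := hi (gi (h z))).
    assert (hw : h w = gi (h z)) by (unfold w; apply Hh).
    assert (Pw : P (h w)) by (rewrite hw; auto).
    assert (nPw : ~ P w) by (intro p; apply (D w p); auto).
    assert (nPz : ~ P z) by (intro p; apply (D z p); auto).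
    rewrite (Fg w nPw), (Ff w nPw), (Fgi w nPw), hw, (proj1 (Hg _)), (proj2 (Hh _)).
    rewrite (Fg z nPz), (Ff z nPz), (Fgi z nPz). auto.
  - rewrite (Fgi (h z) q), (proj2 (Hh _)).
    set (y' := gi (f (g z))).
    assert (nq : ~ P (h y')).
    { destruct (classic (P z)) as [p|p].
      - apply D. unfold y'. auto.
      - unfold y'. rewrite (Fg z p), (Ff z p), (Fgi z p). auto. }
    rewrite (Fg (h y') nq), (proj2 (Hh _)). auto.
Qed.

Definition X (x : R) : R :=
  if Rle_dec x 0 then x else if Rle_dec x tau then tau * x
  else if Rle_dec x 1 then 1 - (1 + tau) * (1 - x) else x.

Lemma G_X : G X.
Proof.
  assert (T1 := tau_pos). assert (T2 := tau_lt1). assert (T3 := tau_sq).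
  apply PL_Ftau.
  - intros x Hx. unfold X. repeat destruct (Rle_dec _ _); auto; lra.
  - unfold X. destruct (Rle_dec 0 0); auto; lra.
  - unfold X. repeat destruct (Rle_dec _ _); try lra; try ring.
  - apply PL_cat with tau.
    + apply (PL_piece _ 0 tau 0 1); auto using inZ_0, inZ_tau. intros x Hx. rewrite tp_1.
      unfold X. repeat destruct (Rle_dec _ _); try lra.
      all: try (replace x with 0 by lra); ring.
    + apply (PL_piece _ tau 1 (tau*tau) (-1)); auto using inZ_1, inZ_tau. intros x Hx. rewrite tp_m1.
      unfold X. repeat destruct (Rle_dec _ _); try lra.
      all: try (replace x with tau by lra; ring). all: nsz.
Qed.

Lemma X_le z : z <= 1 -> X z <= z.
Proof.
  intros Hz. assert (T1 := tau_pos). assert (T2 := tau_lt1).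
  unfold X. repeat destruct (Rle_dec _ _); try lra.
  assert (tau * z <= 1 * z) by (apply Rmult_le_compat_r; lra). lra.
  assert (0 <= tau * (1 - z)) by (apply Rmult_le_pos; lra). lra.
Qed.

Lemma X_dec c y z : 0 < c -> y < 1 -> c <= z <= y ->
  X z <= z - Rmin ((1 - tau) * c) (tau * (1 - y)).
Proof.
  intros Hc Hy Hz. assert (T1 := tau_pos). assert (T2 := tau_lt1).
  assert (M1 := Rmin_l ((1 - tau) * c) (tau * (1 - y))).
  assert (M2 := Rmin_r ((1 - tau) * c) (tau * (1 - y))).
  unfold X. repeat destruct (Rle_dec _ _); try lra.
  - assert ((1 - tau) * c <= (1 - tau) * z) by (apply Rmult_le_compat_l; lra). lra.
  - assert (tau * (1 - y) <= tau * (1 - z)) by (apply Rmult_le_compat_l; lra). lra.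
Qed.

Fixpoint Xn (n : nat) : R -> R :=
  match n with O => fun x => x | S m => fun x => X (Xn m x) end.

Lemma G_Xn n : G (Xn n).
Proof. induction n. apply G_id. simpl. apply G_comp; auto. apply G_X. Qed.

Lemma Xn_le n z : z <= 1 -> Xn n z <= z.
Proof.
  intros Hz. induction n; simpl. lra. assert (Xn n z <= 1) by lra.
  assert (H1 := X_le _ H). lra.
Qed.

Lemma Xn_small c y : 0 < c -> y < 1 -> exists m, Xn m y < c.
Proof.
  intros Hc Hy. set (d := Rmin ((1 - tau) * c) (tau * (1 - y))).
  assert (Hd : 0 < d).
  { assert (T1 := tau_pos). assert (T2 := tau_lt1). unfold d. apply Rmin_glb_lt; apply Rmult_lt_0_compat; lra. }
  assert (C : forall m, Xn m y < c \/ Xn m y <= y - INR m * d).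
  { induction m.
    - right. simpl. lra.
    - change (Xn (S m) y) with (X (Xn m y)).
      assert (Xn m y <= y) by (apply Xn_le; lra).
      destruct IHm as [h|h].
      + left. assert (X (Xn m y) <= Xn m y) by (apply X_le; lra). lra.
      + destruct (Rlt_le_dec (Xn m y) c). left. assert (X (Xn m y) <= Xn m y) by (apply X_le; lra). lra.
        right. assert (X (Xn m y) <= Xn m y - d) by (apply (X_dec c y (Xn m y)); auto; lra).
        rewrite S_INR. lra. }
  destruct (INR_archimed d (y - c) Hd) as [m Hm]. exists m. destruct (C m); auto. lra.
Qed.

Definition Ap (n : nat) (x : R) : R :=
  if Rle_dec x 0 then x else if Rle_dec x (tau ^ (S (S n))) then tau * x
  else if Rle_dec x (tau ^ (S n)) then tau ^ (S n) - (1 + tau) * (tau ^ (S n) - x) else x.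

Lemma tpow_bounds n : 0 < tau ^ n <= 1.
Proof.
  assert (T1 := tau_pos). assert (T2 := tau_lt1).
  induction n; simpl. lra. split. apply Rmult_lt_0_compat; lra.
  assert (tau * tau ^ n <= 1 * 1) by (apply Rmult_le_compat; lra). lra.
Qed.

Lemma G_Ap n : G (Ap n).
Proof.
  assert (T1 := tau_pos). assert (T2 := tau_lt1).
  assert (B := tpow_bounds n). set (c := tau ^ n) in *.
  assert (E1 : tau ^ (S n) = tau * c) by reflexivity.
  assert (E2 : tau ^ (S (S n)) = tau * (tau * c)) by reflexivity.
  assert (L1 : tau * c < c) by (assert (tau * c < 1 * c) by (apply Rmult_lt_compat_r; lra); lra).
  assert (L2 : tau * (tau * c) < tau * c) by (apply Rmult_lt_compat_l; lra).
  assert (P1 : 0 < tau * (tau * c)) by (apply Rmult_lt_0_compat; [lra| apply Rmult_lt_0_compat; lra]).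
  apply PL_Ftau.
  - intros x Hx. unfold Ap. rewrite E1, E2. repeat destruct (Rle_dec _ _); auto; lra.
  - unfold Ap. destruct (Rle_dec 0 0); auto; lra.
  - unfold Ap. rewrite E1, E2. repeat destruct (Rle_dec _ _); try lra.
  - apply PL_cat with (tau ^ (S (S n))). 2: apply PL_cat with (tau ^ (S n)).
    + apply (PL_piece _ 0 _ 0 1); [rewrite E2; lra|auto using inZ_0|auto using inZ_pow, inZ_tau|].
      intros x Hx. rewrite tp_1. unfold Ap. rewrite E1, E2 in *. repeat destruct (Rle_dec _ _); try lra.
      all: try (replace x with 0 by lra); ring.
    + apply (PL_piece _ _ _ (tau * tau ^ (S (S n))) (-1)); [rewrite E1, E2; lra|auto using inZ_pow, inZ_tau|auto using inZ_pow, inZ_tau|].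
      intros x Hx. rewrite tp_m1. unfold Ap. rewrite E1, E2 in *. repeat destruct (Rle_dec _ _); try lra.
      all: try (replace x with (tau * (tau * c)) by lra); ring.
    + apply (PL_piece _ _ _ (tau ^ (S n)) 0); [rewrite E1; lra|auto using inZ_pow, inZ_tau|auto using inZ_1|].
      intros x Hx. rewrite tp_0. unfold Ap. rewrite E1, E2 in *. repeat destruct (Rle_dec _ _); try lra.
      all: try (replace x with (tau * c) by lra); ring.
Qed.

Lemma Ap_fix n x : (x <= 0 \/ tau ^ (S n) <= x) -> Ap n x = x.
Proof.
  intros Hx. assert (T1 := tau_pos). assert (T2 := tau_lt1).
  assert (B := tpow_bounds n). set (c := tau ^ n) in *.
  assert (E1 : tau ^ (S n) = tau * c) by reflexivity.
  assert (E2 : tau ^ (S (S n)) = tau * (tau * c)) by reflexivity.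
  assert (L1 : tau * c < c) by (assert (tau * c < 1 * c) by (apply Rmult_lt_compat_r; lra); lra).
  assert (L2 : tau * (tau * c) < tau * c) by (apply Rmult_lt_compat_l; lra).
  assert (P1 : 0 < tau * (tau * c)) by (apply Rmult_lt_0_compat; [lra| apply Rmult_lt_0_compat; lra]).
  unfold Ap. rewrite E1, E2 in *. repeat destruct (Rle_dec _ _); try lra.
  all: try (replace x with (tau * c) by lra); ring.
Qed.

Lemma Ap_lin n x : 0 <= x <= tau ^ (S (S n)) -> Ap n x = tau * x.
Proof.
  intros Hx. unfold Ap. destruct (Rle_dec x 0). assert (x = 0) by lra. subst; ring.
  destruct (Rle_dec _ _); auto. lra.
Qed.

Definition Hs (f : R -> R) := exists e, 0 < e /\ forall x, (x <= e \/ 1 - e <= x) -> f x = x.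
Definition germ0 (f : R -> R) p := exists d, 0 < d /\ forall x, 0 <= x <= d -> f x = tp p * x.
Definition germ1 (f : R -> R) q := exists d, 0 < d /\ forall x, 1 - d <= x <= 1 -> f x = 1 - tp q * (1 - x).

Lemma G_germ0 f : G f -> exists p, germ0 f p.
Proof.
  intros Hf. destruct (PL_germL f 0 1 (Ftau_PL f Hf)) as [k [d [Hd E]]].
  exists k, d. split; auto. intros x Hx. rewrite E by lra. rewrite G_0; auto. ring.
Qed.
Lemma G_germ1 f : G f -> exists q, germ1 f q.
Proof.
  intros Hf. destruct (PL_germR f 0 1 (Ftau_PL f Hf)) as [k [d [Hd E]]].
  exists k, d. split; auto. intros x Hx. rewrite E by lra. rewrite G_1; auto. ring.
Qed.

Lemma germ0_comp f g p r : germ0 f p -> germ0 g r -> germ0 (fun x => f (g x)) (p + r).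
Proof.
  intros [d1 [H1 E1]] [d2 [H2 E2]].
  assert (K := tp_pos r). assert (Ki := tp_pos (-r)). assert (KK := tp_Kneg r).
  exists (Rmin d2 (d1 * tp (-r))). split.
  - apply Rmin_glb_lt; auto. apply Rmult_lt_0_compat; auto.
  - intros x Hx. assert (M1 := Rmin_l d2 (d1 * tp (-r))). assert (M2 := Rmin_r d2 (d1 * tp (-r))).
    rewrite E2 by lra. rewrite E1. rewrite tp_add; ring.
    split. apply Rmult_le_pos; lra.
    assert (tp r * x <= tp r * (d1 * tp (-r))) by (apply Rmult_le_compat_l; lra).
    replace (tp r * (d1 * tp (-r))) with d1 in H by nsz. lra.
Qed.
Lemma germ1_comp f g p r : germ1 f p -> germ1 g r -> germ1 (fun x => f (g x)) (p + r).
Proof.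
  intros [d1 [H1 E1]] [d2 [H2 E2]].
  assert (K := tp_pos r). assert (Ki := tp_pos (-r)). assert (KK := tp_Kneg r).
  exists (Rmin d2 (d1 * tp (-r))). split.
  - apply Rmin_glb_lt; auto. apply Rmult_lt_0_compat; auto.
  - intros x Hx. assert (M1 := Rmin_l d2 (d1 * tp (-r))). assert (M2 := Rmin_r d2 (d1 * tp (-r))).
    rewrite E2 by lra. rewrite E1. rewrite tp_add; ring.
    assert (tp r * (1 - x) <= tp r * (d1 * tp (-r))) by (apply Rmult_le_compat_l; lra).
    replace (tp r * (d1 * tp (-r))) with d1 in H by nsz.
    assert (0 <= tp r * (1 - x)) by (apply Rmult_le_pos; lra). lra.
Qed.
Lemma germ0_inv f fi p : germ0 f p -> is_inv f fi -> germ0 fi (- p).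
Proof.
  intros [d [Hd E]] Hi. assert (K := tp_pos p). assert (Ki := tp_pos (-p)). assert (KK := tp_Kneg p).
  exists (d * tp p). split. apply Rmult_lt_0_compat; auto.
  intros y Hy. set (x := tp (-p) * y).
  assert (0 <= x <= d).
  { unfold x. split. apply Rmult_le_pos; lra.
    assert (tp (-p) * y <= tp (-p) * (d * tp p)) by (apply Rmult_le_compat_l; lra).
    replace (tp (-p) * (d * tp p)) with d in H by nsz. lra. }
  assert (f x = y) by (rewrite E by auto; unfold x; rewrite <- Rmult_assoc, KK; ring).
  rewrite <- H0. rewrite (proj2 (Hi x)). auto.
Qed.
Lemma germ1_inv f fi p : germ1 f p -> is_inv f fi -> germ1 fi (- p).
Proof.
  intros [d [Hd E]] Hi. assert (K := tp_pos p). assert (Ki := tp_pos (-p)). assert (KK := tp_Kneg p).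
  exists (d * tp p). split. apply Rmult_lt_0_compat; auto.
  intros y Hy. set (x := 1 - tp (-p) * (1 - y)).
  assert (1 - d <= x <= 1).
  { unfold x. assert (0 <= tp (-p) * (1 - y)) by (apply Rmult_le_pos; lra).
    assert (tp (-p) * (1 - y) <= tp (-p) * (d * tp p)) by (apply Rmult_le_compat_l; lra).
    replace (tp (-p) * (d * tp p)) with d in H0 by nsz. lra. }
  assert (f x = y) by (rewrite E by auto; unfold x; ring_simplify; rewrite KK; ring).
  rewrite <- H0. rewrite (proj2 (Hi x)). auto.
Qed.

Lemma germ_H f : G f -> germ0 f 0 -> germ1 f 0 -> Hs f.
Proof.
  intros Hf [d0 [H0 E0]] [d1 [H1 E1]]. exists (Rmin d0 d1). split. apply Rmin_glb_lt; auto.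
  assert (M1 := Rmin_l d0 d1). assert (M2 := Rmin_r d0 d1).
  intros x [Hx|Hx].
  - destruct (Rlt_le_dec x 0). apply G_out; auto. rewrite E0 by lra. rewrite tp_0; ring.
  - destruct (Rle_lt_dec x 1). rewrite E1 by lra. rewrite tp_0; ring. apply G_out; auto.
Qed.

Lemma cm_inv a ai b bi : is_inv a ai -> is_inv b bi -> is_inv (cm a ai b bi) (cm b bi a ai).
Proof.
  intros Ha Hb z. unfold cm. split; sinv; auto.
Qed.

Lemma L1 f fi g gi : G f -> G g -> Hs f -> Hs g -> is_inv f fi -> is_inv g gi -> N (cm f fi g gi).
Proof.
  intros Gf Gg [ef [Hef Ef]] [eg [Heg Eg]] Hf Hg.
  set (e := Rmin (Rmin ef eg) (1/4)).
  assert (He : 0 < e) by (unfold e; repeat apply Rmin_glb_lt; lra).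
  assert (He1 : e <= ef) by (unfold e; assert (H:=Rmin_l (Rmin ef eg) (1/4)); assert (H2:=Rmin_l ef eg); lra).
  assert (He2 : e <= eg) by (unfold e; assert (H:=Rmin_l (Rmin ef eg) (1/4)); assert (H2:=Rmin_r ef eg); lra).
  assert (He3 : e <= 1/4) by (unfold e; apply Rmin_r).
  clearbody e.
  set (P := fun x => e < x < 1 - e).
  assert (Ff : fixes f P).
  { intros x Hx. apply Ef. unfold P in Hx. destruct (Rle_lt_dec x e). left; lra.
    right. destruct (Rle_lt_dec (1 - e) x). lra. exfalso; apply Hx; lra. }
  assert (Fg : fixes g P).
  { intros x Hx. apply Eg. unfold P in Hx. destruct (Rle_lt_dec x e). left; lra.
    right. destruct (Rle_lt_dec (1 - e) x). lra. exfalso; apply Hx; lra. }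
  destruct (Xn_small e (1 - e)) as [n Hn]; auto; try lra.
  destruct (G_inv_ex' (Xn n) (G_Xn n)) as [Yn [HY GY]].
  set (a := Xn n e).
  assert (Ha : 0 < a).
  { unfold a. rewrite <- (G_0 (Xn n) (G_Xn n)). apply G_smono; auto. apply G_Xn. }
  assert (Hae : a <= e) by (apply Xn_le; lra).
  destruct (Xn_small a (1 - e)) as [m Hm]; auto; try lra.
  destruct (G_inv_ex' (Xn m) (G_Xn m)) as [Ym [HYm GYm]].
  assert (Gfi : G fi) by (apply (G_inv f fi); auto).
  assert (Ggi : G gi) by (apply (G_inv g gi); auto).
  set (k := cm gi g Yn (Xn n)). set (ki := cm Yn (Xn n) gi g).
  set (mm := cm fi f (Xn m) Ym). set (mmi := cm (Xn m) Ym fi f).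
  assert (Dk : D1 k) by (apply derived_cm; auto using is_inv_sym).
  assert (Dm : D1 mm) by (apply derived_cm; auto using is_inv_sym, G_Xn).
  assert (Hk : is_inv k ki) by (apply cm_inv; auto using is_inv_sym).
  assert (Hmm : is_inv mm mmi) by (apply cm_inv; auto using is_inv_sym).
  assert (NC : N (cm k ki mm mmi)) by (apply derived_cm; auto).
  assert (MonoN := G_mono (Xn n) (G_Xn n)). assert (MonoM := G_mono (Xn m) (G_Xn m)).
  assert (S1 : forall z, cm f fi g gi z = cm f fi k ki z).
  { intros z. unfold cm, k, ki. apply (disp f fi g gi Yn (Xn n) P); auto using is_inv_sym.
    intros x Px PY. unfold P in Px, PY.
    assert (Xn n (Yn x) <= Xn n (1 - e)) by (apply MonoN; lra).
    rewrite (proj1 (HY x)) in H. lra. }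
  set (P' := fun x => a <= x < 1 - e).
  assert (Fk : fixes k P').
  { intros x Hx. unfold k, cm. unfold P' in Hx.
    destruct (Rlt_le_dec x a).
    - assert (Yn x < e).
      { destruct (Rlt_le_dec (Yn x) e); auto.
        assert (Xn n e <= Xn n (Yn x)) by (apply MonoN; auto). rewrite (proj1 (HY x)) in H. unfold a in r. lra. }
      assert (Fgi := fix_inv g gi P Hg Fg).
      rewrite (Fgi (Yn x)) by (unfold P; lra). rewrite (proj1 (HY x)). apply Fg. unfold P; lra.
    - assert (1 - e <= x) by (destruct (Rlt_le_dec x (1 - e)); [exfalso; apply Hx; lra | lra]).
      assert (1 - e <= Yn x).
      { destruct (Rlt_le_dec (Yn x) (1 - e)); auto.
        assert (Xn n (Yn x) <= Xn n (1 - e)) by (apply MonoN; lra). rewrite (proj1 (HY x)) in H0. lra. }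
      assert (Fgi := fix_inv g gi P Hg Fg).
      rewrite (Fgi (Yn x)) by (unfold P; lra). rewrite (proj1 (HY x)). apply Fg. unfold P; lra. }
  assert (Ff' : fixes f P').
  { intros x Hx. apply Ff. unfold P, P' in *. intros [h1 h2]. apply Hx. lra. }
  assert (S2 : forall z, cm k ki f fi z = cm k ki mm mmi z).
  { intros z. change (ki (fi (k (f z))) = ki (Ym (f (Xn m (fi (k (f (Ym (fi (Xn m z)))))))))).
    apply (disp k ki f fi (Xn m) Ym P'); auto using is_inv_sym.
    intros x Px PX. unfold P' in Px, PX.
    assert (Xn m x <= Xn m (1 - e)) by (apply MonoM; lra). lra. }
  apply (N_inv _ _ NC). intros z. split.
  - rewrite <- S2, S1. apply (proj2 (cm_inv f fi k ki Hf Hk z)).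
  - rewrite S1, <- S2. apply (proj1 (cm_inv f fi k ki Hf Hk z)).
Qed.

Lemma tpow_anti m k : tau ^ (m + k) <= tau ^ m.
Proof.
  assert (T1 := tau_pos). assert (T2 := tau_lt1).
  induction k. rewrite Nat.add_0_r; lra. rewrite Nat.add_succ_r. simpl. assert (B := tpow_bounds (m + k)).
  assert (tau * tau ^ (m + k) <= 1 * tau ^ (m + k)) by (apply Rmult_le_compat_r; lra). lra.
Qed.

Definition A := Ap 1.
Definition B (x : R) := sg (A (sg x)).
Lemma sg_sg x : sg (sg x) = x. Proof. unfold sg; ring. Qed.
Lemma tau2 : tau ^ 2 = 1 - tau. Proof. simpl. rewrite Rmult_1_r. apply tau_sq. Qed.
Lemma tau3 : tau ^ 3 = tau - tau ^ 2.
Proof. rewrite tau2. simpl. rewrite Rmult_1_r. assert (H := tau_sq). nsz. Qed.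

Lemma G_A : G A. Proof. apply G_Ap. Qed.
Lemma G_B : G B. Proof. apply (G_sig A G_A). Qed.

Lemma L2 Ai h hi : is_inv A Ai -> G h -> Hs h -> is_inv h hi -> N (cm A Ai h hi).
Proof.
  intros HA Gh [eh [Heh Eh]] Hh.
  assert (T1 := tau_pos). assert (T2 := tau_lt1). assert (T3 := tau_neq0).
  destruct (pow_lt_1_zero tau ltac:(rewrite Rabs_right; lra) eh Heh) as [N0 HN].
  set (n := S N0).
  assert (Hn : tau ^ (S n) < eh).
  { assert (H := HN (S n) ltac:(unfold n; lia)). rewrite Rabs_right in H; auto.
    left; apply tpow_bounds. }
  destruct (G_inv_ex' (Ap n) (G_Ap n)) as [w [Hw Gw]].
  assert (wfix : forall x, x <= 0 \/ tau ^ (S n) <= x -> w x = x).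
  { intros x Hx. rewrite <- (Ap_fix n x Hx) at 1. apply Hw. }
  assert (Bd1 : tau ^ (S (S n)) <= tau ^ 3) by apply (tpow_anti 3 N0).
  assert (Bd2 : tau ^ (S n) <= tau ^ 2) by apply (tpow_anti 2 N0).
  assert (Bd3 : tau ^ (S (S (S n))) = tau * tau ^ (S (S n))) by reflexivity.
  assert (wlin : forall x, 0 <= x <= tau ^ (S (S (S n))) -> w x = x / tau).
  { intros x Hx. assert (E : Ap n (x / tau) = x).
    { rewrite Ap_lin. field; auto. split. apply Rmult_le_pos; [lra|]. left; apply Rinv_0_lt_compat; lra.
      apply (Rmult_le_reg_l tau); auto. replace (tau * (x / tau)) with x by (field; auto). lra. }
    rewrite <- E at 1. apply Hw. }
  set (d := tau ^ (S (S (S n)))).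
  assert (Hd0 : 0 < d) by apply tpow_bounds.
  assert (Hd1 : d <= tau ^ 3) by (unfold d; apply (tpow_anti 3 (S N0))).
  assert (P2 := tpow_bounds 2). assert (E2 := tau2). assert (E3 := tau3).
  set (e := fun x => A (w x)). set (ei := fun x => Ap n (Ai x)).
  assert (He : is_inv e ei) by (intros x; unfold e, ei; split; sinv; auto).
  assert (Ge : G e) by (unfold e; apply G_comp; [apply G_A | auto]).
  assert (Hse : Hs e).
  { exists d. split; auto. intros x [Hx|Hx]; unfold e.
    - destruct (Rle_lt_dec x 0).
      + rewrite wfix by auto. unfold A. apply Ap_fix; auto.
      + rewrite wlin by (unfold d in Hx; lra). unfold A. rewrite Ap_lin. field; auto.
        split. apply Rmult_le_pos; [lra|]. left; apply Rinv_0_lt_compat; lra.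
        apply (Rmult_le_reg_l tau); auto. replace (tau * (x / tau)) with x by (field; auto).
        fold d in Bd3. assert (tau * tau ^ (S (S n)) <= tau * tau ^ 3) by (apply Rmult_le_compat_l; lra).
        simpl in *. lra.
    - rewrite wfix by (right; lra). unfold A. apply Ap_fix. right. lra. }
  assert (NE : N (cm e ei h hi)) by (apply L1; auto; exists eh; split; auto).
  assert (Cm : forall x, w (h x) = h (w x)).
  { apply (commute w (Ap n) h hi (fun x => 0 < x < tau ^ (S n)) (fun x => eh < x)); auto using is_inv_sym.
    - intros x Hx. apply wfix. destruct (Rle_lt_dec x 0). left; auto. right.
      destruct (Rle_lt_dec (tau ^ (S n)) x); auto. exfalso; apply Hx; lra.
    - intros x Hx. apply Eh. left. lra.
    - intros x Hx. lra. }
  apply N_ext with (fun y => w (cm e ei h hi (Ap n y))).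
  - apply N_conj; auto using is_inv_sym.
  - intros y. unfold cm, e, ei. rewrite Cm. sinv. auto.
Qed.

Lemma L2B Bi h hi : is_inv B Bi -> G h -> Hs h -> is_inv h hi -> N (cm B Bi h hi).
Proof.
  intros HB Gh [eh [Heh Eh]] Hh.
  set (Ai := fun x => sg (Bi (sg x))).
  assert (HA : is_inv A Ai).
  { intros x. unfold Ai. split.
    - rewrite <- (sg_sg (A _)). change (sg (B (Bi (sg x))) = x).
      rewrite (proj1 (HB _)). apply sg_sg.
    - rewrite <- (sg_sg x) at 1. change (sg (Bi (B (sg x))) = x).
      rewrite (proj2 (HB _)). apply sg_sg. }
  set (h' := fun x => sg (h (sg x))). set (hi' := fun x => sg (hi (sg x))).
  assert (Hh' : is_inv h' hi') by (intros x; unfold h', hi'; split; rewrite sg_sg; sinv; apply sg_sg).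
  assert (Gh' : G h') by (apply G_sig; auto).
  assert (Hsh' : Hs h').
  { exists eh. split; auto. intros x Hx. unfold h'. rewrite Eh. apply sg_sg. unfold sg. lra. }
  assert (NA := L2 Ai h' hi' HA Gh' Hsh' Hh').
  apply N_ext with (fun x => sg (cm A Ai h' hi' (sg x))).
  - apply N_sig; auto.
  - intros x. unfold cm, Ai, h', hi', B. rewrite !sg_sg. auto.
Qed.

Lemma AB_commute x : A (B x) = B (A x).
Proof.
  assert (T1 := tau_pos). assert (T2 := tau_lt1). assert (E2 := tau2).
  destruct (G_inv_ex' A G_A) as [Ai [HA _]]. destruct (G_inv_ex' B G_B) as [Bi [HB _]].
  apply (commute A Ai B Bi (fun x => 0 < x < tau ^ 2) (fun x => tau < x < 1)); auto.
  - intros y Hy. unfold A. apply Ap_fix. destruct (Rle_lt_dec y 0). left; auto. right.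
    destruct (Rle_lt_dec (tau ^ 2) y); auto. exfalso; apply Hy; lra.
  - intros y Hy. unfold B. unfold A. rewrite Ap_fix. apply sg_sg. unfold sg.
    destruct (Rle_lt_dec y tau). right; simpl in *; lra. left.
    destruct (Rle_lt_dec 1 y). lra. exfalso; apply Hy; lra.
  - intros y Hy. assert (tau * tau < tau * 1) by (apply Rmult_lt_compat_l; lra). simpl in *. lra.
Qed.

Lemma germ0_A : germ0 A 1.
Proof.
  exists (tau ^ 3). split. apply tpow_bounds. intros x Hx. unfold A. rewrite Ap_lin by auto. rewrite tp_1; auto.
Qed.
Lemma germ1_A : germ1 A 0.
Proof.
  assert (E2 := tau2). assert (T1 := tau_pos).
  exists (1 - tau ^ 2). split. lra. intros x Hx. unfold A. rewrite Ap_fix. rewrite tp_0; ring. right; simpl in *; lra.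
Qed.
Lemma germ0_B : germ0 B 0.
Proof.
  assert (E2 := tau2). assert (T1 := tau_pos).
  exists (1 - tau ^ 2). split. lra. intros x Hx. unfold B, A. rewrite Ap_fix. rewrite sg_sg, tp_0; ring.
  right. unfold sg. simpl in *; lra.
Qed.
Lemma germ1_B : germ1 B 1.
Proof.
  exists (tau ^ 3). split. apply tpow_bounds. intros x Hx. unfold B, A. rewrite Ap_lin. rewrite tp_1; unfold sg; ring.
  unfold sg. simpl in *; lra.
Qed.

Lemma Gen (S : (R -> R) -> Prop) :
  (forall f g, S f -> S g -> S (fun x => f (g x))) ->
  (forall f fi, S f -> is_inv f fi -> S fi) ->
  S A -> S B -> (forall h, G h -> Hs h -> S h) -> forall a, G a -> S a.
Proof.
  intros Sc Si SA SB SH.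
  destruct (G_inv_ex' A G_A) as [Ai [HAi GAi]]. destruct (G_inv_ex' B G_B) as [Bi [HBi GBi]].
  assert (SAi : S Ai) by eauto. assert (SBi : S Bi) by eauto.
  assert (gAi0 := germ0_inv _ _ _ germ0_A HAi). assert (gAi1 := germ1_inv _ _ _ germ1_A HAi).
  assert (gBi0 := germ0_inv _ _ _ germ0_B HBi). assert (gBi1 := germ1_inv _ _ _ germ1_B HBi).
  assert (Main : forall n a p q, (Z.abs_nat p + Z.abs_nat q <= n)%nat -> G a -> germ0 a p -> germ1 a q -> S a).
  { induction n; intros a p q Hn Ga g0 g1.
    - assert (p = 0%Z) by lia. assert (q = 0%Z) by lia. subst. apply SH; auto. apply germ_H; auto.
    - destruct (Z_lt_le_dec 0 p).
      + assert (S (fun x => Ai (a x))).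
        { apply (IHn _ (-1 + p)%Z (- 0 + q)%Z); [lia | apply G_comp; auto | apply germ0_comp; auto | apply germ1_comp; auto]. }
        rewrite (fext a (fun x => A (Ai (a x)))). apply Sc; auto. intros x; sinv; auto.
      + destruct (Z_lt_le_dec p 0).
        * assert (S (fun x => A (a x))).
          { apply (IHn _ (1 + p)%Z (0 + q)%Z); [lia | apply G_comp; auto using G_A | apply germ0_comp; auto using germ0_A | apply germ1_comp; auto using germ1_A]. }
          rewrite (fext a (fun x => Ai (A (a x)))). apply Sc; auto. intros x; sinv; auto.
        * assert (p = 0%Z) by lia. subst p.
          destruct (Z_lt_le_dec 0 q).
          -- assert (S (fun x => Bi (a x))).
             { apply (IHn _ (- 0 + 0)%Z (-1 + q)%Z); [lia | apply G_comp; auto | apply germ0_comp; auto | apply germ1_comp; auto]. }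
             rewrite (fext a (fun x => B (Bi (a x)))). apply Sc; auto. intros x; sinv; auto.
          -- destruct (Z_lt_le_dec q 0).
             ++ assert (S (fun x => B (a x))).
                { apply (IHn _ (0 + 0)%Z (1 + q)%Z); [lia | apply G_comp; auto using G_B | apply germ0_comp; auto using germ0_B | apply germ1_comp; auto using germ1_B]. }
                rewrite (fext a (fun x => Bi (B (a x)))). apply Sc; auto. intros x; sinv; auto.
             ++ assert (q = 0%Z) by lia. subst. apply SH; auto. apply germ_H; auto. }
  intros a Ga. destruct (G_germ0 a Ga) as [p g0]. destruct (G_germ1 a Ga) as [q g1].
  apply (Main _ a p q (le_n _)); auto.
Qed.

Definition Cx (x xi : R -> R) (y : R -> R) := G y /\ forall yi, is_inv y yi -> N (cm x xi y yi).

Lemma N_id f : (forall x, f x = x) -> N f.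
Proof. intros E. apply N_ext with (fun x => x). apply derived_id. intros; symmetry; auto. Qed.

Lemma Cx_all x xi : G x -> is_inv x xi -> Cx x xi A -> Cx x xi B ->
  (forall h, G h -> Hs h -> Cx x xi h) -> forall y, G y -> Cx x xi y.
Proof.
  intros Gx Hx CA CB CH. apply Gen; auto.
  - intros y z [Gy Cy] [Gz Cz]. split. apply G_comp; auto.
    intros yzi Hyz.
    destruct (G_inv_ex' y Gy) as [yi [Hyi Gyi]]. destruct (G_inv_ex' z Gz) as [zi [Hzi Gzi]].
    assert (E : forall w, yzi w = zi (yi w)).
    { apply inv_unique with (fun w => y (z w)); auto. intros w; split; sinv; auto. }
    apply N_ext with (fun w => cm x xi z zi (zi (cm x xi y yi (z w)))).
    + apply (N_comp (cm x xi z zi) (fun w => zi (cm x xi y yi (z w)))). apply Cz; auto.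
      apply (N_conj zi z); auto using is_inv_sym.
    + intros w. unfold cm. rewrite E. sinv. auto.
  - intros y yi [Gy Cy] Hy. split. apply (G_inv y yi); auto.
    intros yii Hyii. assert (E : forall w, yii w = y w) by (apply inv_unique with yi; auto using is_inv_sym).
    apply N_ext with (fun w => y (cm y yi x xi (yi w))).
    + apply (N_conj y yi); auto. apply (N_inv (cm x xi y yi)); auto. apply cm_inv; auto.
    + intros w. unfold cm. rewrite E. sinv. auto.
Qed.

Definition Tt (x : R -> R) := G x /\ forall xi, is_inv x xi -> forall y, G y -> Cx x xi y.

Lemma Tt_all : forall a, G a -> Tt a.
Proof.
  destruct (G_inv_ex' A G_A) as [Ai0 [HAi0 GAi0]]. destruct (G_inv_ex' B G_B) as [Bi0 [HBi0 GBi0]].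
  apply Gen.
  - intros x z [Gx Tx] [Gz Tz]. split. apply G_comp; auto.
    intros xzi Hxz y Gy. split; auto. intros yi Hy.
    destruct (G_inv_ex' x Gx) as [xi [Hxi Gxi]]. destruct (G_inv_ex' z Gz) as [zi [Hzi Gzi]].
    assert (E : forall w, xzi w = zi (xi w)).
    { apply inv_unique with (fun w => x (z w)); auto. intros w; split; sinv; auto. }
    apply N_ext with (fun w => zi (cm x xi y yi (z (cm z zi y yi w)))).
    + apply (N_comp (fun w => zi (cm x xi y yi (z w))) (cm z zi y yi)).
      apply (N_conj zi z); auto using is_inv_sym. apply Tx; auto.
      apply Tz; auto.
    + intros w. unfold cm. rewrite E. sinv. auto.
  - intros x xi [Gx Tx] Hx. split. apply (G_inv x xi); auto.
    intros xii Hxii y Gy. split; auto. intros yi Hy.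
    assert (E : forall w, xii w = x w) by (apply inv_unique with xi; auto using is_inv_sym).
    apply N_ext with (fun w => x (cm y yi x xi (xi w))).
    + apply (N_conj x xi); auto. apply (N_inv (cm x xi y yi)). apply Tx; auto. apply cm_inv; auto.
    + intros w. unfold cm. rewrite E. sinv. auto.
  - split. apply G_A. intros Ai HA. apply Cx_all; auto using G_A.
    + split. apply G_A. intros Ai' HA'. apply N_id. intros w. unfold cm.
      rewrite (inv_unique _ _ _ HA' HA). sinv. auto.
    + split. apply G_B. intros Bi HB. apply N_id. intros w. unfold cm.
      rewrite AB_commute. sinv. auto.
    + intros h Gh Hsh. split; auto. intros hi Hh. apply L2; auto.
  - split. apply G_B. intros Bi HB. apply Cx_all; auto using G_B.
    + split. apply G_A. intros Ai HA. apply N_id. intros w. unfold cm.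
      rewrite <- AB_commute. sinv. auto.
    + split. apply G_B. intros Bi' HB'. apply N_id. intros w. unfold cm.
      rewrite (inv_unique _ _ _ HB' HB). sinv. auto.
    + intros h Gh Hsh. split; auto. intros hi Hh. apply L2B; auto.
  - intros h Gh Hsh. split; auto. intros hi Hh. apply Cx_all; auto.
    + split. apply G_A. intros Ai HA. apply (N_inv (cm A Ai h hi)). apply L2; auto. apply cm_inv; auto.
    + split. apply G_B. intros Bi HB. apply (N_inv (cm B Bi h hi)). apply L2B; auto. apply cm_inv; auto.
    + intros h' Gh' Hsh'. split; auto. intros hi' Hh'. apply L1; auto.
Qed.

Lemma dir2 f : D1 f -> D2 f.
Proof.
  induction 1 as [|a ai b bi f0 Ha Hb Hia Hib D IH].
  - apply derived_id.
  - apply (N_comp (cm a ai b bi) f0); auto.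
    destruct (Tt_all a Ha) as [_ Ta]. apply (Ta ai Hia b Hb); auto.
Qed.

Theorem mainTheorem17 : forall f : R -> R, Ftau' f <-> Ftau'' f.
Proof. intros f; split. apply dir2. apply dir1. Qed.
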